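(* Let $K$ be a field and $E$ a row-finite graph with a fixed choice of special edges. Let $x=x_1\dots x_m$ ($m\ge 1$) be a cycle in $E$ all of whose edges are special and which has an exit. Let $(F_x,\phi_x)$ be the extended representation graph associated to $x$ (regarded as a closed path in $E_d$ consisting only of real edges), and let $W=W(F_x,\phi_x)$ be the associated right $L(E)$-module. Then $W$ is not a simple $L(E)$-module, and $\operatorname{End}_{L(E)}(W)\cong K$ as rings.
   Context: Let $E=(E^0,E^1,s,r)$ be a row-finite directed graph (no vertex emits infinitely many edges). A vertex is regular if it emits at least one edge. For every regular vertex $v$ a fixed edge $e^v\in s^{-1}(v)$ is chosen; these edges are called special, all other edges nonspecial. A path of length $n\ge 1$ is a word $y_1\dots y_n$ of edges with $r(y_i)=s(y_{i+1})$; a path of length $0$ is a vertex $v$ with $s(v)=r(v)=v$. A cycle is a path $x_1\dots x_m$ of length $\ge1$ with $s(x_1)=r(x_m)$ and $s(x_i)\ne s(x_j)$ for $i\neq j$; an exit of it is an edge $e$ with $s(e)=s(x_i)$ and $e\ne x_i$ for some $i$. The double graph $E_d$ has vertex set $E^0$ and edges $\{e,e^*: e\in E^1\}$ with $s_d(e)=s(e)$, $r_d(e)=r(e)$, $s_d(e^* )=r(e)$, $r_d(e^* )=s(e)$; the $e$ are real edges, the $e^*$ ghost edges. For a path $p=e_1\dots e_n$ in $E$ set $p^*=e_n^*\dots e_1^*$. The set $X$ of basis paths consists of the following paths in $E_d$: all vertices $v\in E^0$; all $p$ and $p^*$ with $p$ a path of length $\ge1$ in $E$; all $pq^*$ with $p=e_1\dots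 e_k$, $q=f_1\dots f_n$ paths of length $\ge 1$ in $E$, $r(p)=r(q)$, and either $e_k\ne f_n$ or $e_k=f_n$ nonspecial. The Leavitt path algebra $L(E)$ is the $K$-algebra generated by $\{v,e,e^*: v\in E^0,e\in E^1\}$ subject to $uv=\delta_{uv}u$; $s(e)e=e=er(e)$, $r(e)e^*=e^*=e^*s(e)$; $e^*f=\delta_{ef}r(e)$; and $\sum_{e\in s^{-1}(v)}ee^*=v$ for every regular $v$. For $x=x_1\dots x_m$ a closed path of length $\ge1$ in $E_d$ consisting only of real edges (or only of ghost edges), and $1\le i\le m$, let $X_i$ be the set of basis paths $y=y_1\dots y_n$ of length $n\ge 1$ such that $x_iy_1$ is a basis path and $y_1\ne x_{i+1}$ (with $x_{m+1}=x_1$). The graph $F_x$ has vertices $w_i$ ($1\le i\le m$) and $w_{i,y}$ ($1\le i\le m$, $y\in X_i$), all distinct, and edges $f_i$ from $w_{i-1}$ to $w_i$ (with $w_0=w_m$) and $f_{i,y}$ with range $w_{i,y}$ and source $w_i$ if $|y|=1$, resp. $w_{i,y_1\dots y_{n-1}}$ if $y=y_1\dots y_n$, $n\ge2$. The homomorphism $\phi_x:F_x\to E_d$ is given by $\phi_x(w_i)=r_d(x_i)$, $\phi_x(w_{i,y})=r_d(y)$, $\phi_x(f_i)=x_i$, $\phi_x(f_{i,y})=$ the last edge of $y$. For such a pair $(F,\phi)$ (a graph $F$ with a graph homomorphism $\phi:F\to E_d$), $W(F,\phi)$ is the $K$-vector space with basis $F^0$, made into a right $L(E)$-module by the following action on basis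 vertices $w\in F^0$ (for $v\in E^0$, $e\in E^1$): $w.v=w$ if $\phi(w)=v$ and $0$ otherwise; $w.e=r(f)$ if some $f\in s^{-1}(w)$ has $\phi(f)=e$, $w.e=s(f)$ if some $f\in r^{-1}(w)$ has $\phi(f)=e^*$, and $w.e=0$ otherwise; $w.e^*=r(f)$ if some $f\in s^{-1}(w)$ has $\phi(f)=e^*$, $w.e^*=s(f)-T$ if $e$ is special and some $f\in r^{-1}(w)$ has $\phi(f)=e$, where $T=\sum r(p)$ over all paths $p$ in $F$ starting at $s(f)$ with $\phi(p)=dd^*$ for some $d\in s^{-1}(s(e))\setminus\{e\}$, and $w.e^*=0$ otherwise. (This extends uniquely to a right $L(E)$-module structure.) *)

(* Defs.v *)
From HB Require Import structures.
From mathcomp Require Import all_boot all_algebra.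
From mathcomp Require Import finmap.
From mathcomp.multinomials Require Import monalg.
From Stdlib Require Import ClassicalEpsilon.

Set Implicit Arguments.
Unset Strict Implicit.
Unset Printing Implicit Defensive.

Import GRing.Theory.
Local Open Scope ring_scope.

Definition pick_some {T : Type} (P : T -> Prop) : option T :=
  match excluded_middle_informative (exists t, P t) with
  | left H => Some (proj1_sig (constructive_indefinite_description _ H))
  | right _ => None
  end.

(* a duplicate-free enumeration of {t | P t} if this set is finite,
   and [::] otherwise *)
Definition fin_enum {T : eqType} (P : T -> Prop) : seq T :=
  odflt [::] (pick_some (fun l : seq T => uniq l /\ forall t, P t <-> t \in l)).

Section Graph.
Variables (V Ed : choiceType) (s r : Ed -> V) (sp : V -> Ed).

Definition row_finite : Prop :=
  forall v : V, exists l : seq Ed, forall e, e \in l <-> s e = v.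

Definition regular (v : V) : Prop := exists e, s e = v.

(* sp v is the chosen special edge e^v of a regular vertex v *)
Definition special_choice : Prop := forall v, regular v -> s (sp v) = v.

Definition special (e : Ed) : bool := e == sp (s e).

(* edges of the double graph E_d: (e, false) = e (real),
   (e, true) = e^* (ghost) *)
Definition dedge := (Ed * bool)%type.
Definition sd (a : dedge) : V := if a.2 then r a.1 else s a.1.
Definition rd (a : dedge) : V := if a.2 then s a.1 else r a.1.

Definition adj_ok (a b : dedge) : bool :=
  [&& rd a == sd b, ~~ (a.2 && ~~ b.2)
    & (~~ a.2 && b.2) ==> ((a.1 != b.1) || ~~ special a.1)].

(* basis paths of length >= 1: exactly the words p, p^*, p q^* *)
Definition basis_word (y : seq dedge) : bool :=
  if y is a :: y' then path adj_ok a y' else false.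

Definition is_cycle (m : nat) (x : 'I_m -> Ed) : Prop :=
  [/\ (0 < m)%N,
      forall i, r (x i) = s (x (ordS i)) &
      forall i j, s (x i) = s (x j) -> i = j].

Definition has_exit (m : nat) (x : 'I_m -> Ed) : Prop :=
  exists e i, s e = s (x i) /\ e <> x i.

Record rep_graph := RepGraph {
  FV : choiceType;
  FE : choiceType;
  srcF : FE -> FV;
  rngF : FE -> FV;
  phiV : FV -> V;
  phiE : FE -> dedge }.

Inductive gen := GV of V | GE of Ed | GS of Ed.

Section Module.
Variables (K : fieldType) (F : rep_graph).

Definition Wsp := {malg K[FV F]}.

Definition Tsum (e : Ed) (f : FE F) : Wsp :=
  \sum_(pr <- fin_enum (fun pr : FE F * FE F =>
      [/\ srcF pr.1 = srcF f, rngF pr.1 = srcF pr.2 &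
          exists d, [/\ phiE pr.1 = (d, false), phiE pr.2 = (d, true),
                        s d = s e & d <> e]]))
     << rngF pr.2 >>.

Definition act_basis (w : FV F) (g : gen) : Wsp :=
  match g with
  | GV v => if phiV w == v then << w >> else 0
  | GE e =>
      match pick_some (fun f => srcF f = w /\ phiE f = (e, false)) with
      | Some f => << rngF f >>
      | None =>
        match pick_some (fun f => rngF f = w /\ phiE f = (e, true)) with
        | Some f => << srcF f >>
        | None => 0
        end
      end
  | GS e =>
      match pick_some (fun f => srcF f = w /\ phiE f = (e, true)) with
      | Some f => << rngF f >>
      | None =>
        match pick_some (fun f => rngF f = w /\ phiE f = (e, false)) with
        | Some f => if special e then << srcF f >> - Tsum e f else 0
        | None => 0
        end
      end
  end.

Definition act (g : gen) (u : Wsp) : Wsp :=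
  \sum_(w <- msupp u) u@_w *: act_basis w g.

Definition submodule (U : Wsp -> Prop) : Prop :=
  [/\ U 0,
      forall u1 u2, U u1 -> U u2 -> U (u1 + u2),
      forall (k : K) u, U u -> U (k *: u) &
      forall g u, U u -> U (act g u)].

Definition simple_module : Prop :=
  (exists u : Wsp, u <> 0) /\
  forall U, submodule U -> (forall u, U u -> u = 0) \/ (forall u, U u).

Definition is_endo (h : Wsp -> Wsp) : Prop :=
  [/\ forall u1 u2, h (u1 + u2) = h u1 + h u2,
      forall (k : K) u, h (k *: u) = k *: h u &
      forall g u, h (act g u) = act g (h u)].

Definition End_iso_field : Prop :=
  exists Phi : K -> Wsp -> Wsp,
    [/\ forall a, is_endo (Phi a),
        forall h, is_endo h -> exists! a, forall u, h u = Phi a u,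
        forall a b u, Phi (a + b) u = Phi a u + Phi b u,
        forall a b u, Phi (a * b) u = Phi a (Phi b u) &
        forall u, Phi 1 u = u].

End Module.

Section Fx.
Variables (m : nat) (x : 'I_m -> Ed).

Definition real (e : Ed) : dedge := (e, false).

(* raw vertices: inl i = w_i ; inr (i, y) = w_{i,y}  (0-based i) *)
Definition Fraw := ('I_m + ('I_m * seq dedge))%type.

Definition inX (i : 'I_m) (y : seq dedge) : bool :=
  [&& basis_word y, basis_word [:: real (x i); head (real (x i)) y]
    & head (real (x i)) y != real (x (ordS i))].

Definition Fvalid (v : Fraw) : bool :=
  match v with inl _ => true | inr (i, y) => inX i y end.

Definition FxV := {v : Fraw | Fvalid v}.

Definition FxV_inl (i : 'I_m) : FxV := exist _ (inl i) isT.

(* every vertex has exactly one incoming edge (f_i into w_i, f_{i,y}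
   into w_{i,y}); we name each edge of F_x by its range vertex *)
Definition Fx_src (w : FxV) : FxV :=
  match sval w with
  | inl i => FxV_inl (ord_pred i)
  | inr (i, y) =>
      if size y == 1%N then FxV_inl i
      else insubd w (inr (i, belast (head (real (x i)) y) (behead y)) : Fraw)
  end.

Definition Fx_phiV (w : FxV) : V :=
  match sval w with
  | inl i => r (x i)
  | inr (i, y) => rd (last (real (x i)) y)
  end.

Definition Fx_phiE (f : FxV) : dedge :=
  match sval f with
  | inl i => real (x i)
  | inr (i, y) => last (real (x i)) y
  end.

Definition Fx : rep_graph := @RepGraph FxV FxV Fx_src id Fx_phiV Fx_phiE.

End Fx.
End Graph.

(* Main.v *)
Require Import Defs.
From HB Require Import structures.
From mathcomp Require Import all_boot all_order all_algebra.
From mathcomp Require Import finmap.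
From mathcomp.multinomials Require Import monalg.
From Stdlib Require Import ClassicalEpsilon.

Set Implicit Arguments.
Unset Strict Implicit.
Unset Printing Implicit Defensive.
Import Order.TTheory GRing.Theory Num.Theory.
Local Open Scope fset_scope.
Local Open Scope ring_scope.

Lemma pick_someS (T : Type) (P : T -> Prop) t : pick_some P = Some t -> P t.
Proof.
rewrite /pick_some; case: excluded_middle_informative => // H [<-].
exact: proj2_sig.
Qed.

Lemma pick_someN (T : Type) (P : T -> Prop) : pick_some P = None -> forall t, ~ P t.
Proof.
rewrite /pick_some; case: excluded_middle_informative => // H _ t Pt.
by apply: H; exists t.
Qed.

Lemma pick_someU (T : Type) (P : T -> Prop) t :
  P t -> (forall t', P t' -> t' = t) -> pick_some P = Some t.
Proof.
move=> Pt U; case E: (pick_some P) => [t'|].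
  by rewrite (U _ (pick_someS E)).
by case: (pick_someN E Pt).
Qed.

Lemma fin_enumP (T : eqType) (P : T -> Prop) t : t \in fin_enum P -> P t.
Proof.
rewrite /fin_enum; case E: (pick_some _) => [l|] //= tl.
by have [_ H] := pick_someS E; apply/H.
Qed.
Section ActLin.
Variables (V Ed : choiceType) (s : Ed -> V) (sp : V -> Ed) (K : fieldType) (F : rep_graph V Ed).
Local Notation W := {malg K[FV F]}.

Lemma actEw g (u : W) (d : {fset FV F}) : msupp u `<=` d ->
  act s sp g u = \sum_(w <- d) u@_w *: act_basis s sp K w g.
Proof.
move=> le; rewrite /act; apply: big_fset_incl => // w _ /mcoeff_outdom ->.
by rewrite scale0r.
Qed.

Lemma actD g (u1 u2 : W) : act s sp g (u1 + u2) = act s sp g u1 + act s sp g u2.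
Proof.
have h1 : msupp u1 `<=` msupp u1 `|` msupp u2 by apply: fsubsetUl.
have h2 : msupp u2 `<=` msupp u1 `|` msupp u2 by apply: fsubsetUr.
rewrite (actEw _ (msuppD_le u1 u2)) (actEw _ h1) (actEw _ h2) -big_split /=.
by apply: eq_bigr => w _; rewrite mcoeffD scalerDl.
Qed.

Lemma actZ g k (u : W) : act s sp g (k *: u) = k *: act s sp g u.
Proof.
rewrite (actEw _ (msuppZ_le k u)) /act scaler_sumr.
by apply: eq_bigr => w _; rewrite mcoeffZ scalerA.
Qed.

Lemma act0 g : act s sp g (0 : W) = 0.
Proof. by rewrite /act msupp0 big_seq_fset0. Qed.

Lemma actU g w : act s sp g (<< w >> : W) = act_basis s sp K w g.
Proof. by rewrite /act msuppU oner_eq0 big_seq_fset1 mcoeffUU scale1r. Qed.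

Lemma malgU_scale (c : K) (w : FV F) : << c *g w >> = c *: (<< w >> : W).
Proof. by apply/malgP => k; rewrite mcoeffZ !mcoeffU mulr_natr. Qed.

Lemma malg_decomp (u : W) : u = \sum_(w <- msupp u) u@_w *: << w >>.
Proof.
by rewrite {1}(monalgE u); apply: eq_bigr => w _; rewrite malgU_scale.
Qed.

Lemma mcoeff_act g (u : W) z :
  (act s sp g u)@_z = \sum_(w <- msupp u) u@_w * (act_basis s sp K w g)@_z.
Proof.
rewrite /act raddf_sum /=; apply: eq_bigr => w _; by rewrite mcoeffZ.
Qed.
Lemma endo_decomp (h : W -> W) :
  (forall u1 u2, h (u1 + u2) = h u1 + h u2) ->
  (forall (k : K) u, h (k *: u) = k *: h u) ->
  forall al : K, (forall w, h << w >> = al *: << w >>) -> forall u, h u = al *: u.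
Proof.
move=> hD hZ al Hw u.
have h0 : h 0 = 0 by have := hZ 0 0; rewrite !scale0r.
rewrite (malg_decomp u) scaler_sumr.
suff H : forall sq : seq (FV F), h (\sum_(w <- sq) u@_w *: << w >>) =
    \sum_(w <- sq) al *: (u@_w *: << w >>) by apply: H.
elim => [|a sq IH]; first by rewrite !big_nil h0.
by rewrite !big_cons hD IH hZ Hw !scalerA mulrC.
Qed.
Lemma endo_uniq (h : W -> W) (a b : K) (w : FV F) :
  (forall u, h u = a *: u) -> (forall u, h u = b *: u) -> b = a.
Proof.
move=> Ha Hb; have := Hb << w >>; rewrite Ha => /(congr1 (mcoeff w)).
by rewrite !mcoeffZ mcoeffUU !mulr1 => ->.
Qed.

Lemma scale_endo (a : K) : is_endo s sp (fun u : W => a *: u).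
Proof.
split.
- by move=> u1 u2; rewrite scalerDr.
- by move=> k u; rewrite !scalerA mulrC.
- by move=> g u; rewrite actZ.
Qed.

Lemma iso_of_scalar :
  (forall h, is_endo s sp h -> exists a : K, forall u : W, h u = a *: u) ->
  forall w : FV F, End_iso_field s sp K F.
Proof.
move=> Hsc w; exists (fun a u => a *: u); split.
- exact: scale_endo.
- move=> h Hh; have [a Ha] := Hsc h Hh.
  exists a; split; first exact: Ha.
  by move=> b Hb; apply: esym; apply: (endo_uniq w Ha Hb).
- by move=> a b u; rewrite scalerDl.
- by move=> a b u; rewrite scalerA.
- by move=> u; rewrite scale1r.
Qed.
End ActLin.
Section Graph.
Variables (K : fieldType) (V Ed : choiceType) (s r : Ed -> V) (sp : V -> Ed)
  (m : nat) (x : 'I_m -> Ed).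
Hypothesis Hcyc : is_cycle s r x.
Hypothesis Hsp : forall i, special s sp (x i).

Local Notation FV := (FxV s r sp x).
Local Notation src := (@Fx_src V Ed s r sp m x).
Local Notation phE := (@Fx_phiE V Ed s r sp m x).
Local Notation F := (Fx s r sp x).

Lemma inX_rcons i y a : inX s r sp x i (rcons y a) -> y != [::] -> inX s r sp x i y.
Proof.
case: y => [|b y'] //= /and3P[H1 H2 H3] _.
move: H1; rewrite /basis_word /= rcons_path => /andP[H1 _].
by apply/and3P; split.
Qed.

Lemma validE (f : FV) i y : sval f = inr (i, y) -> inX s r sp x i y.
Proof. by case: f => v Hv /= Hf; subst v. Qed.

Lemma srcE_inl (f : FV) k : sval f = inl k -> sval (src f) = inl (ord_pred k).
Proof. by case: f => v Hv /= Hf; subst v. Qed.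

Lemma srcE_inr (f : FV) i y a : sval f = inr (i, rcons y a) ->
  sval (src f) = if y is [::] then inl i else inr (i, y).
Proof.
move=> Hf; have Vf := validE Hf.
case: f Hf => v Hv /= Hf; subst v; rewrite /Fx_src /=.
case: y Vf Hv => [|b y'] Vf Hv /=; first by [].
rewrite size_rcons /= val_insubd /= belast_rcons.
by rewrite /Fvalid (inX_rcons Vf).
Qed.

Lemma classify (f : FV) :
  (exists k, sval f = inl k) \/ (exists i y a, sval f = inr (i, rcons y a)).
Proof.
case E: (sval f) => [k|[i y]]; first by left; exists k.
right; case: y E => [|b y] E.
  by have := validE E; rewrite /inX /basis_word.
by exists i, (belast b y), (last b y); rewrite -lastI.
Qed.

Lemma phiE_inl (f : FV) k : sval f = inl k -> phE f = real (x k).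
Proof. by case: f => v Hv /= Hf; subst v. Qed.

Lemma phiE_inr (f : FV) i y a : sval f = inr (i, rcons y a) -> phE f = a.
Proof. by case: f => v Hv /= Hf; subst v; rewrite /Fx_phiE /= last_rcons. Qed.

Lemma inl_inr_src (f1 f2 : FV) k i y a :
  sval f1 = inl k -> sval f2 = inr (i, rcons y a) ->
  src f1 = src f2 -> phE f1 = phE f2 -> False.
Proof.
move=> H1 H2 Hs Hp.
have := congr1 sval Hs; rewrite (srcE_inl H1) (srcE_inr H2).
rewrite (phiE_inl H1) (phiE_inr H2) in Hp.
case: y H2 => [|b y] H2 //= [Hk].
have := validE H2; rewrite /inX /= -Hp -Hk ord_predK.
by rewrite eqxx !andbF.
Qed.

Lemma child_uniq (f1 f2 : FV) : src f1 = src f2 -> phE f1 = phE f2 -> f1 = f2.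
Proof.
move=> Hs Hp; apply: val_inj => /=.
case: (classify f1) => [[k1 H1]|[i1 [y1 [a1 H1]]]];
case: (classify f2) => [[k2 H2]|[i2 [y2 [a2 H2]]]].
- have := congr1 sval Hs; rewrite (srcE_inl H1) (srcE_inl H2) => -[] Hk0.
  have Hk : ord_pred k1 = ord_pred k2 by apply: val_inj.
  by rewrite H1 H2 (ord_pred_inj Hk).
- by case: (inl_inr_src H1 H2 Hs Hp).
- by case: (inl_inr_src H2 H1 (esym Hs) (esym Hp)).
- have := congr1 sval Hs; rewrite (srcE_inr H1) (srcE_inr H2).
  rewrite (phiE_inr H1) (phiE_inr H2) in Hp; rewrite H1 H2 Hp.
  by case: y1 {H1} => [|b1 y1]; case: y2 {H2} => [|b2 y2] //= => -[] *; subst.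
Qed.

Definition gen_of (a : Ed * bool) : gen V Ed := if a.2 then @GS V Ed a.1 else @GE V Ed a.1.

Lemma act_child (c : FV) :
  act_basis s sp K (F := F) (src c) (gen_of (phE c)) = << c >>.
Proof.
rewrite /gen_of; case E: (phE c) => [e []] /=.
  rewrite (@pick_someU _ _ c) //; last first.
    by move=> t' [H1 H2]; apply: child_uniq => //; rewrite H2 E.
rewrite (@pick_someU _ _ c) //.
by move=> t' [H1 H2]; apply: child_uniq => //; rewrite H2 E.
Qed.

Local Notation W := (Wsp K F).
Local Notation vin j := (@FxV_inl V Ed s r sp m x j).

Definition istree (f : FV) : bool := if sval f is inr _ then true else false.
Definition wt (y : seq (Ed * bool)) : int := \sum_(a <- y) (if a.2 then -1 else 1).
Definition wtV (f : FV) : int := if sval f is inr (_, y) then wt y else 0.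

Lemma wt_rcons y a : wt (rcons y a) = wt y + (if a.2 then -1 else 1).
Proof. by rewrite /wt -cats1 big_cat big_seq1. Qed.

Lemma cyc_inj i j : s (x i) = s (x j) -> i = j.
Proof. by case: Hcyc => _ _; apply. Qed.

Lemma cyc_r i : r (x i) = s (x (ordS i)).
Proof. by case: Hcyc => _ H _; exact: H. Qed.

Lemma act_step (t : FV) (c : 'I_m) :
  act_basis s sp K (F := F) t (@GE V Ed (x c)) = 0 \/
  exists t', act_basis s sp K (F := F) t (@GE V Ed (x c)) = << t' >> /\
    (istree t' -> istree t /\ wtV t' = wtV t + 1).
Proof.
rewrite /act_basis /=.
case E1: (pick_some _) => [f|].
  have [Hs Hp] := pick_someS E1; right; exists f; split => // Tf.
  case: (classify f) => [[k Hk]|[i [y [a Hf]]]].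
    by rewrite /istree Hk in Tf.
  rewrite (phiE_inr Hf) in Hp; subst a.
  have Hsf := srcE_inr Hf; rewrite /= Hs in Hsf.
  case: y Hf Hsf => [|b y] Hf Hsf.
    exfalso; have := validE Hf; rewrite /inX /basis_word /adj_ok /= andbT.
    move=> /andP[/andP[/eqP Hrs _] Hne].
    rewrite /rd /sd /= cyc_r in Hrs.
    by rewrite (cyc_inj Hrs) eqxx in Hne.
  by rewrite /istree /wtV Hsf Hf wt_rcons.
case E2: (pick_some _) => [f|]; last by left.
have [Hft Hp] := pick_someS E2; subst f.
right; exists (src t); split => // Tt.
case: (classify t) => [[k Hk]|[i [y [a Ht]]]].
  by rewrite /istree (srcE_inl Hk) in Tt.
rewrite (phiE_inr Ht) in Hp; subst a.
have Hst := srcE_inr Ht.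
case: y Ht Hst => [|b y] Ht Hst; first by rewrite /istree Hst in Tt.
by rewrite /istree /wtV Hst Ht wt_rcons /= addrNK.
Qed.

Definition chainact (l : seq 'I_m) (u : W) : W :=
  foldl (fun u c => act s sp (@GE V Ed (x c)) u) u l.

Lemma chain0 l : chainact l 0 = 0.
Proof. by elim: l => [|c l IH] //=; rewrite act0. Qed.

Lemma chainD l u1 u2 : chainact l (u1 + u2) = chainact l u1 + chainact l u2.
Proof. by elim: l u1 u2 => [|c l IH] u1 u2 //=; rewrite actD IH. Qed.

Lemma chainZ l k u : chainact l (k *: u) = k *: chainact l u.
Proof. by elim: l u => [|c l IH] u //=; rewrite actZ IH. Qed.

Lemma chain_sum l (sq : seq FV) (G : FV -> W) :
  chainact l (\sum_(w <- sq) G w) = \sum_(w <- sq) chainact l (G w).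
Proof.
elim: sq => [|a sq IH]; first by rewrite !big_nil chain0.
by rewrite !big_cons chainD IH.
Qed.

Lemma chain_decomp l u :
  chainact l u = \sum_(w <- msupp u) u@_w *: chainact l << w >>.
Proof.
rewrite {1}(malg_decomp u) chain_sum; apply: eq_bigr => w _.
by rewrite chainZ.
Qed.

Lemma chain_step l t : chainact l << t >> = 0 \/
  exists t', chainact l << t >> = << t' >> /\
    (istree t' -> istree t /\ wtV t' = wtV t + (size l)%:Z).
Proof.
elim: l t => [|c l IH] t /=.
  by right; exists t; split => //; rewrite addr0.
rewrite actU; case: (act_step t c) => [->|[t1 [-> H1]]].
  by left; rewrite chain0.
case: (IH t1) => [->|[t' [-> H']]]; first by left.
right; exists t'; split => // Tt'.
have [T1 W1] := H' Tt'; have [Tt W0] := H1 T1.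
by split => //; rewrite W1 W0 intS addrA.
Qed.

Lemma seq_min (T : eqType) (sq : seq T) (P : pred T) (f : T -> int) :
  (exists z, z \in sq /\ P z) ->
  exists z, [/\ z \in sq, P z & forall t, t \in sq -> P t -> f z <= f t].
Proof.
elim: sq => [|a sq IH]; first by case=> z [].
move=> Hex; case Hs: (has P sq).
  have [z [Hz Pz Hm]] : exists z, [/\ z \in sq, P z &
      forall t, t \in sq -> P t -> f z <= f t].
    by apply: IH; have /hasP [z Hz Pz] := Hs; exists z.
  case Pa: (P a).
    case: (lerP (f a) (f z)) => Hle.
      exists a; split; rewrite ?mem_head //.
      move=> t; rewrite in_cons => /orP[/eqP -> //|Ht Pt].
      exact: le_trans Hle (Hm _ Ht Pt).
    exists z; split; rewrite ?in_cons ?Hz ?orbT //.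
    move=> t; rewrite in_cons => /orP[/eqP -> _|Ht Pt]; last exact: Hm.
    exact: ltW.
  exists z; split; rewrite ?in_cons ?Hz ?orbT //.
  move=> t; rewrite in_cons => /orP[/eqP -> |Ht Pt]; last exact: Hm.
  by rewrite Pa.
case: Hex => z []; rewrite in_cons => /orP[/eqP ->|Hz Pz]; last first.
  by move/negbT: Hs => /hasPn /(_ z Hz); rewrite Pz.
move=> Pa; exists a; split; rewrite ?mem_head //.
move=> t; rewrite in_cons => /orP[/eqP -> //|Ht Pt].
by move/negbT: Hs => /hasPn /(_ t Ht); rewrite Pt.
Qed.

Lemma fixed_no_tree (u : W) (l : seq 'I_m) : (0 < size l)%N ->
  chainact l u = u -> forall z, z \in msupp u -> ~~ istree z.
Proof.
move=> Hl Hu z0 Hz0; apply/negP => T0.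
have [z [Hz Tz Hmin]] := @seq_min _ (msupp u) istree wtV
  (ex_intro _ z0 (conj Hz0 T0)).
have : u@_z = 0.
  rewrite -Hu chain_decomp raddf_sum /=; apply: big1 => w _.
  rewrite mcoeffZ; case: (chain_step l w) => [->|[t' [-> Ht']]].
    by rewrite mcoeff0 mulr0.
  rewrite mcoeffU; case: eqP => [Etz|]; last by rewrite mulr0.
  subst t'; have [Tw Wz] := Ht' Tz.
  case Hw: (w \in msupp u); last first.
    by move/negbT: Hw => /mcoeff_outdom ->; rewrite mul0r.
  have := Hmin w Hw Tw; rewrite Wz -[X in _ <= X]addr0 lerD2l lez_nat leqn0.
  by move=> /eqP Hs0; rewrite Hs0 in Hl.
by move/eqP; rewrite mcoeff_eq0 Hz.
Qed.

Lemma phiV_inl (f : FV) k : sval f = inl k -> Fx_phiV f = r (x k).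
Proof. by case: f => v Hv /= Hf; subst v. Qed.

Lemma iter_ordS n (j : 'I_m) : val (iter n (@ordS m) j) = ((j + n) %% m)%N.
Proof.
elim: n => [|n IH] /=; first by rewrite addn0 modn_small.
by rewrite IH addnS -addn1 modnDml addn1.
Qed.

Fixpoint cyc (j : 'I_m) (n : nat) : seq 'I_m :=
  if n is n'.+1 then ordS j :: cyc (ordS j) n' else [::].

Lemma size_cyc j n : size (cyc j n) = n.
Proof. by elim: n j => [|n IH] j //=; rewrite IH. Qed.

Lemma src_vinS j : src (vin (ordS j)) = vin j.
Proof. by apply: val_inj => /=; rewrite ordSK. Qed.

Lemma act_child_real (c : FV) e : phE c = (e, false) ->
  act_basis s sp K (F := F) (src c) (@GE V Ed e) = << c >>.
Proof. by move=> H; have := act_child c; rewrite H. Qed.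

Lemma chain_cons c l u : chainact (c :: l) u = chainact l (act s sp (@GE V Ed (x c)) u).
Proof. by []. Qed.

Lemma cycS j n : cyc j n.+1 = ordS j :: cyc (ordS j) n.
Proof. by []. Qed.

Lemma chain_cyc n j : chainact (cyc j n) << vin j >> = << vin (iter n (@ordS m) j) >>.
Proof.
elim: n j => [|n IH] j; first by [].
have Hp : phE (vin (ordS j)) = (x (ordS j), false) by [].
have H := act_child_real Hp.
rewrite src_vinS in H.
rewrite cycS chain_cons actU H IH.
rewrite (iterSr n (@ordS m) j).
exact: (@erefl _ _).
Qed.
Lemma endo_scalar (h : W -> W) : is_endo s sp h -> exists a : K, forall u, h u = a *: u.
Proof.
move=> [hD hZ hA].
have m_gt0 : (0 < m)%N by case: Hcyc.
pose j0 : 'I_m := Ordinal m_gt0.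
have h0 : h 0 = 0 by have := hZ 0 0; rewrite !scale0r.
have hchain : forall l u, h (chainact l u) = chainact l (h u).
  by elim => [|c l IH] u //=; rewrite IH hA.
have hsum : forall (sq : seq FV) (G : FV -> W),
    h (\sum_(w <- sq) G w) = \sum_(w <- sq) h (G w).
  by move=> sq G; elim: sq => [|a sq IH]; rewrite ?big_nil ?h0 // !big_cons hD IH.
pose b := vin j0.
pose u := h << b >>.
have Hit : iter m (@ordS m) j0 = j0.
  by apply: val_inj; rewrite iter_ordS /= add0n modnn.
have Hfix : chainact (cyc j0 m) u = u.
  by rewrite /u -hchain chain_cyc Hit.
have HV : act s sp (@GV V Ed (r (x j0))) u = u.
  by rewrite /u -hA actU /act_basis /= eqxx.
have Hsupp : forall z, z \in msupp u -> z = b.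
  move=> z Hz.
  have NT := fixed_no_tree (l := cyc j0 m) (u := u) _ Hfix Hz.
  rewrite size_cyc in NT; have {}NT := NT m_gt0.
  case: (classify z) => [[k Hk]|[i [y [a Hz']]]]; last by rewrite /istree Hz' in NT.
  have Hph : Fx_phiV z = r (x j0).
    case: (eqVneq (Fx_phiV z) (r (x j0))) => // Hne; exfalso.
    have : u@_z = 0.
      rewrite -HV mcoeff_act; apply: big1 => w _.
      rewrite /act_basis /=; case: ifP => Hw; last by rewrite mcoeff0 mulr0.
      rewrite mcoeffU; case: eqP => [Ewz|]; last by rewrite mulr0.
      by subst w; rewrite (eqP Hw) eqxx in Hne.
    by move/eqP; rewrite mcoeff_eq0 Hz.
  rewrite (phiV_inl Hk) !cyc_r in Hph.
  have Hkj := ordS_inj (cyc_inj Hph).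
  by apply: val_inj => /=; rewrite Hk Hkj.
pose al := u@_b.
have Hu : u = al *: << b >>.
  apply/malgP => z; rewrite mcoeffZ mcoeffU.
  case: eqP => [<-|Hne]; first by rewrite mulr1n mulr1.
  rewrite mulr0n mulr0; case Hz: (z \in msupp u).
    by case: Hne; rewrite (Hsupp z Hz).
  by apply: mcoeff_outdom; rewrite Hz.
have Qc : forall c, h << src c >> = al *: << src c >> -> h << c >> = al *: << c >>.
  move=> c Hc; rewrite -(act_child c) -actU hA Hc actZ; reflexivity.
have Qinl : forall k, h << vin k >> = al *: << vin k >>.
  have Qit : forall n, h << vin (iter n (@ordS m) j0) >> = al *: << vin (iter n (@ordS m) j0) >>.
    elim => [|n IH] /=; first exact: Hu.
    by apply: Qc; rewrite src_vinS.
  move=> k; have -> : k = iter k (@ordS m) j0.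
    by apply: val_inj; rewrite iter_ordS /= add0n modn_small.
  exact: Qit.
have Qall : forall z, h << z >> = al *: << z >>.
  suff H : forall n (z : FV) i y a, (size y <= n)%N ->
      sval z = inr (i, rcons y a) -> h << z >> = al *: << z >>.
    move=> z; case: (classify z) => [[k Hk]|[i [y [a Hz]]]]; last exact: H (leqnn _) Hz.
    have -> : z = vin k by apply: val_inj => /=; rewrite Hk.
    exact: Qinl.
  elim => [|n IH] z i y a Hs Hz; apply: Qc; have Hsz := srcE_inr Hz.
    case: y Hs Hz Hsz => [|b' y] Hs Hz Hsz; last by exfalso; move: Hs.
    have -> : src z = vin i by apply: val_inj => /=; rewrite Hsz.
    exact: Qinl.
  case: y Hs Hz Hsz => [|b' y] Hs Hz Hsz.
    have -> : src z = vin i by apply: val_inj => /=; rewrite Hsz.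
    exact: Qinl.
  rewrite lastI in Hsz.
  by apply: (IH _ i (belast b' y) (last b' y)) => //; rewrite size_belast.
exists al; exact: (endo_decomp hD hZ Qall).
Qed.

Section NonSimple.
Variables (i0 : 'I_m) (e0 : Ed).
Hypothesis Hns : ~~ special s sp e0.

Definition inU (w : FV) : bool :=
  if sval w is inr (i, y) then (i == i0) && (head (real (x i0)) y == real e0)
  else false.

Lemma inU_child f : inU (src f) -> inU f.
Proof.
case: (classify f) => [[k Hk]|[i [y [a Hf]]]].
  by rewrite /inU (srcE_inl Hk).
by rewrite /inU (srcE_inr Hf) Hf; case: y Hf => [|b y] Hf.
Qed.

Lemma inU_parent t : inU t -> phE t <> real e0 -> inU (src t).
Proof.
case: (classify t) => [[k Hk]|[i [y [a Ht]]]].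
  by rewrite /inU Hk.
rewrite (phiE_inr Ht) => + Hne.
rewrite /inU (srcE_inr Ht) Ht; case: y Ht => [|b y] Ht //=.
by move=> /andP[_ /eqP].
Qed.

Definition Uset (u : W) : Prop := forall w, w \in msupp u -> inU w.

Lemma U0 : Uset 0.
Proof. by move=> w; rewrite msupp0 in_fset0. Qed.

Lemma UD u1 u2 : Uset u1 -> Uset u2 -> Uset (u1 + u2).
Proof.
move=> H1 H2 w /(fsubsetP (msuppD_le u1 u2)); rewrite in_fsetU => /orP[].
  exact: H1.
exact: H2.
Qed.

Lemma UZ k u : Uset u -> Uset (k *: u).
Proof. by move=> H w /(fsubsetP (msuppZ_le k u)); apply: H. Qed.

Lemma UN u : Uset u -> Uset (- u).
Proof. by move=> H w; rewrite msuppN; apply: H. Qed.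

Lemma UB u1 u2 : Uset u1 -> Uset u2 -> Uset (u1 - u2).
Proof. by move=> H1 H2; apply: UD => //; apply: UN. Qed.

Lemma U_single w : inU w -> Uset << w >>.
Proof. by move=> Hw z; rewrite msuppU oner_eq0 in_fset1 => /eqP ->. Qed.

Lemma U_sum (T : eqType) (sq : seq T) (G : T -> W) :
  (forall w, w \in sq -> Uset (G w)) -> Uset (\sum_(w <- sq) G w).
Proof.
elim: sq => [|a sq IH] H; first by rewrite big_nil; apply: U0.
rewrite big_cons; apply: UD; first by apply: H; rewrite mem_head.
by apply: IH => w Hw; apply: H; rewrite in_cons Hw orbT.
Qed.

Lemma U_Tsum e f : inU (src f) -> Uset (Tsum s K (F := F) e f).
Proof.
move=> Hf; rewrite /Tsum; apply: U_sum => pr /fin_enumP [H1 H2 _].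
apply: U_single; apply: inU_child; rewrite /= in H1 H2.
rewrite -H2; apply: inU_child; rewrite H1; exact: Hf.
Qed.

Lemma U_ab w g : inU w -> Uset (act_basis s sp K (F := F) w g).
Proof.
move=> Hw; case: g => [v|e|e]; rewrite /act_basis /=.
- by case: ifP => _; [apply: U_single | apply: U0].
- case E1: (pick_some _) => [f|].
    have [Hs _] := pick_someS E1; apply: U_single; apply: inU_child.
    by rewrite Hs.
  case E2: (pick_some _) => [f|]; last exact: U0.
  have [Hf Hp] := pick_someS E2; subst f.
  by apply: U_single; apply: inU_parent => //; rewrite Hp; case.
- case E1: (pick_some _) => [f|].
    have [Hs _] := pick_someS E1; apply: U_single; apply: inU_child.
    by rewrite Hs.
  case E2: (pick_some _) => [f|]; last exact: U0.
  have [Hf Hp] := pick_someS E2; subst f.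
  case: ifP => Hspe; last exact: U0.
  have Hpar : inU (src w).
    apply: inU_parent => //; rewrite Hp => -[Ee]; subst e.
    by move: Hns; rewrite Hspe.
  apply: UB; first exact: U_single.
  exact: U_Tsum.
Qed.

Lemma U_sub : submodule s sp Uset.
Proof.
split.
- exact: U0.
- exact: UD.
- exact: UZ.
- move=> g u Hu; rewrite /act; apply: U_sum => w Hw; apply: UZ.
  by apply: U_ab; apply: Hu.
Qed.
End NonSimple.

Lemma not_simple e0 j : s e0 = s (x j) -> e0 <> x j ->
  ~ simple_module s sp K F.
Proof.
move=> Hse Hne [_ Hsim].
have Hns : ~~ special s sp e0.
  have := Hsp j; rewrite /special -Hse => /eqP <-.
  by apply/eqP.
pose i0 := ord_pred j.
have Hv : Fvalid s r sp x (inr (i0, [:: real e0])).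
  rewrite /Fvalid /inX /basis_word /= /adj_ok /= andbT.
  apply/andP; split.
    apply/andP; split => //.
    by apply/eqP; rewrite /rd /sd /= cyc_r /i0 ord_predK Hse.
  by rewrite /i0 ord_predK; apply/eqP => -[].
pose rt : FV := @exist _ (fun v => Fvalid s r sp x v) _ Hv.
have Hrt : inU i0 e0 rt by rewrite /inU /= !eqxx.
case: (Hsim _ (U_sub i0 Hns)) => [Hz|Hall].
  have := Hz _ (U_single Hrt); move/eqP; rewrite monalgU_eq0.
  by rewrite oner_eq0.
have := Hall << vin i0 >> (vin i0).
rewrite msuppU oner_eq0 in_fset1 eqxx => /(_ isT).
by rewrite /inU.

Qed.
End Graph.
Theorem theorem6p1 (K : fieldType) (V Ed : choiceType) (s r : Ed -> V)
  (sp : V -> Ed) (m : nat) (x : 'I_m -> Ed) :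
  row_finite s ->
  special_choice s sp ->
  is_cycle s r x ->
  (forall i, special s sp (x i)) ->
  has_exit s x ->
  ~ simple_module s sp K (Fx s r sp x) /\ End_iso_field s sp K (Fx s r sp x).
Proof.
move=> _ _ Hc Hs [e0 [j [Hse Hne]]].
split; first exact: (not_simple Hc Hs Hse Hne).
apply: (@iso_of_scalar V Ed s sp K (Fx s r sp x) _ (@FxV_inl V Ed s r sp m x j)).
move=> h Hh; exact: (endo_scalar Hc Hh).
Qed.
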